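(* For all real $0\le a\le b\le 1$ and all $\epsilon\in(0,\tfrac12)$, $$\frac{(\sqrt b+\sqrt a)^{2(1+\epsilon)}+(\sqrt b-\sqrt a)^{2(1+\epsilon)}}{2}-a^{1+\epsilon}-b^{1+\epsilon}\ge (b^\epsilon-a^\epsilon)a.$$ *)

(* Defs.v *)
From Stdlib Require Import Reals.
Open Scope R_scope.

(* Real power x^y for x >= 0 and y > 0, with the standard convention 0^y = 0.
   (Stdlib's Rpower x y = exp (y * ln x) would give 1 at x = 0.) *)
Definition rpow (x y : R) : R := if Req_EM_T x 0 then 0 else Rpower x y.

(* Main.v *)
Require Import Defs.
From Stdlib Require Import Reals.
From Stdlib Require Import Lra.
Open Scope R_scope.

Lemma rpow_pos x y : 0 < x -> rpow x y = Rpower x y.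
Proof. intros H; unfold rpow; destruct (Req_EM_T x 0); [lra|reflexivity]. Qed.

Lemma rpow_0 y : rpow 0 y = 0.
Proof. unfold rpow; destruct (Req_EM_T 0 0); [reflexivity|lra]. Qed.

Lemma Rpower_pos x y : 0 < Rpower x y.
Proof. unfold Rpower; apply exp_pos. Qed.

Lemma rpow_ge0 x y : 0 <= rpow x y.
Proof. unfold rpow; destruct (Req_EM_T x 0); [lra|left; apply Rpower_pos]. Qed.

Lemma exp_convex l A B : 0 <= l <= 1 ->
  exp (l*A + (1-l)*B) <= l * exp A + (1-l) * exp B.
Proof.
  intros Hl. set (M := l*A + (1-l)*B).
  assert (HA : exp A = exp M * exp (A - M)).
  { rewrite <- exp_plus; f_equal; ring. }
  assert (HB : exp B = exp M * exp (B - M)).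
  { rewrite <- exp_plus; f_equal; ring. }
  pose proof (exp_ineq1_le (A - M)). pose proof (exp_ineq1_le (B - M)).
  pose proof (exp_pos M).
  rewrite HA, HB.
  assert (l * (exp M * exp (A - M)) >= l * (exp M * (1 + (A - M)))).
  { apply Rle_ge, Rmult_le_compat_l; [lra|]. apply Rmult_le_compat_l; lra. }
  assert ((1-l) * (exp M * exp (B - M)) >= (1-l) * (exp M * (1 + (B - M)))).
  { apply Rle_ge, Rmult_le_compat_l; [lra|]. apply Rmult_le_compat_l; lra. }
  assert (l * (exp M * (1 + (A - M))) + (1-l) * (exp M * (1 + (B - M))) = exp M).
  { unfold M; ring. }
  lra.
Qed.

Lemma bern w p : 1 <= p -> 0 <= w -> rpow w p >= 1 + p * (w - 1).
Proof.
  intros Hp Hw. destruct Hw as [Hw|Hw].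
  - rewrite rpow_pos by lra.
    assert (E : w = exp ((/p) * (p * ln w) + (1 - /p) * 0)).
    { replace ((/p) * (p * ln w) + (1 - /p) * 0) with (ln w) by (field; lra).
      rewrite exp_ln; auto. }
    assert (0 <= /p <= 1).
    { split. left; apply Rinv_0_lt_compat; lra.
      rewrite <- Rinv_1; apply Rinv_le_contravar; lra. }
    pose proof (exp_convex (/p) (p * ln w) 0 H).
    rewrite <- E, exp_0 in H0. unfold Rpower.
    assert (p * w <= exp (p * ln w) + (p - 1)).
    { replace (p*w) with (p * w * 1) by ring.
      apply (Rmult_le_compat_l p) in H0; [|lra].
      replace (p * (/ p * exp (p * ln w) + (1 - / p) * 1)) with (exp (p * ln w) + (p - 1)) in H0 by (field; lra).
      lra. }
    lra.
  - subst. rewrite rpow_0. lra.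
Qed.

Lemma tangent u m p : 1 <= p -> 0 < m -> 0 <= u ->
  rpow u p >= rpow m p + p * (rpow m p / m) * (u - m).
Proof.
  intros Hp Hm Hu.
  pose proof (bern (u / m) p Hp) as B.
  assert (0 <= u / m) by (unfold Rdiv; apply Rmult_le_pos; [lra| left; apply Rinv_0_lt_compat; lra]).
  specialize (B H).
  rewrite (rpow_pos m) by lra.
  assert (Hk : rpow u p = Rpower m p * rpow (u / m) p).
  { destruct Hu as [Hu|Hu].
    - rewrite !rpow_pos; [|apply Rdiv_lt_0_compat; lra|lra].
      rewrite Rpower_mult_distr; [|lra|apply Rdiv_lt_0_compat; lra].
      f_equal; field; lra.
    - subst. unfold Rdiv. rewrite Rmult_0_l, !rpow_0. ring. }
  rewrite Hk.
  pose proof (Rpower_pos m p).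
  apply Rle_ge. apply Rge_le in B.
  apply (Rmult_le_compat_l (Rpower m p)) in B; [|lra].
  replace (Rpower m p + p * (Rpower m p / m) * (u - m)) with
    (Rpower m p * (1 + p * (u / m - 1))) by (field; lra).
  exact B.
Qed.

Lemma jensen2 u v p : 1 <= p -> 0 <= u -> 0 <= v -> 0 < u + v ->
  rpow u p + rpow v p >= 2 * rpow ((u+v)/2) p.
Proof.
  intros Hp Hu Hv Huv.
  assert (Hm : 0 < (u+v)/2) by lra.
  pose proof (tangent u _ p Hp Hm Hu).
  pose proof (tangent v _ p Hp Hm Hv).
  set (m := (u+v)/2) in *.
  assert (p * (rpow m p / m) * (u - m) + p * (rpow m p / m) * (v - m) = 0).
  { unfold m. field. lra. }
  lra.
Qed.

Lemma rpow_sq s p : 0 <= s -> rpow s (2 * p) = rpow (s * s) p.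
Proof.
  intros [Hs|Hs].
  - rewrite !rpow_pos; [|nra|lra].
    rewrite <- Rpower_mult.
    f_equal. replace 2 with (1+1) by ring. rewrite Rpower_plus, Rpower_1 by lra. reflexivity.
  - subst. rewrite Rmult_0_l, !rpow_0. reflexivity.
Qed.

Lemma rpow_succ a e : 0 <= a -> rpow a (1 + e) = rpow a e * a.
Proof.
  intros [Ha|Ha].
  - rewrite !rpow_pos by lra. rewrite Rpower_plus, Rpower_1 by lra. ring.
  - subst. rewrite !rpow_0. ring.
Qed.

Theorem mainTheorem6 (a b eps : R) :
  0 <= a -> a <= b -> b <= 1 -> 0 < eps -> eps < 1/2 ->
  (rpow (sqrt b + sqrt a) (2 * (1 + eps)) + rpow (sqrt b - sqrt a) (2 * (1 + eps))) / 2
    - rpow a (1 + eps) - rpow b (1 + eps)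
  >= (rpow b eps - rpow a eps) * a.
Proof.
  intros Ha Hab Hb1 He He2.
  destruct (Req_dec b 0) as [Hb0|Hb0].
  { assert (a = 0) by lra. subst. rewrite sqrt_0, Rplus_0_r, Rminus_0_r, !rpow_0. lra. }
  assert (Hb : 0 < b) by lra.
  pose proof (sqrt_pos a) as Hxa. pose proof (sqrt_lt_R0 b Hb) as Hyb.
  pose proof (sqrt_le_1_alt a b Hab) as Hxy.
  pose proof (sqrt_sqrt a Ha) as Sa. pose proof (sqrt_sqrt b (Rlt_le _ _ Hb)) as Sb.
  rewrite !rpow_sq by lra.
  pose proof (jensen2 ((sqrt b + sqrt a) * (sqrt b + sqrt a))
    ((sqrt b - sqrt a) * (sqrt b - sqrt a)) (1 + eps)) as J.
  replace (((sqrt b + sqrt a) * (sqrt b + sqrt a) + (sqrt b - sqrt a) * (sqrt b - sqrt a)) / 2)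
    with (a + b) in J by nra.
  assert (J' : rpow ((sqrt b + sqrt a) * (sqrt b + sqrt a)) (1 + eps) +
       rpow ((sqrt b - sqrt a) * (sqrt b - sqrt a)) (1 + eps) >= 2 * rpow (a + b) (1 + eps)).
  { apply J; nra. }
  rewrite (rpow_succ (a+b)) in J' by lra.
  rewrite (rpow_succ a), (rpow_succ b) by lra.
  assert (rpow b eps <= rpow (a+b) eps).
  { rewrite !rpow_pos by lra. apply Rle_Rpower_l; lra. }
  pose proof (rpow_ge0 b eps).
  nra.
Qed.
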